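(* Let $X$ be a discretely geodesic metric space with $\beta$-stable intervals. For all $x,y,z\in X$ there exists a point $v\in I(x,y)$ with $d(z,v)\le\beta\cdot 2(x\mid y)_z$.
   Context: $(x\mid y)_z=\frac12(d(z,x)+d(z,y)-d(x,y))$. $X$ is discretely geodesic if $d$ is integer valued and any $x,y$ are joined by an isometric embedding $\gamma\colon\{0,\dots,d(x,y)\}\to X$ with $\gamma(0)=x,\gamma(d(x,y))=y$. $I(x,y)=\{u: d(x,u)+d(u,y)=d(x,y)\}$. $\beta$-stable intervals: for all $x,y,y'$ with $d(y,y')=1$, the Hausdorff distance between $I(x,y)$ and $I(x,y')$ is at most $\beta$. *)

(* Defs.v *)
From Stdlib Require Import Reals.
Open Scope R_scope.

Definition is_nat_metric {X : Type} (d : X -> X -> nat) : Prop :=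
  (forall x y, d x y = 0%nat <-> x = y) /\
  (forall x y, d x y = d y x) /\
  (forall x y z, (d x z <= d x y + d y z)%nat).

Definition discretely_geodesic {X : Type} (d : X -> X -> nat) : Prop :=
  is_nat_metric d /\
  forall x y, exists gamma : nat -> X,
    gamma 0%nat = x /\ gamma (d x y) = y /\
    (forall i j, (i <= d x y)%nat -> (j <= d x y)%nat ->
       INR (d (gamma i) (gamma j)) = Rabs (INR i - INR j)).

Definition interval {X : Type} (d : X -> X -> nat) (x y : X) (u : X) : Prop :=
  (d x u + d u y = d x y)%nat.

(* Hausdorff distance between A and B is at most beta. Since distances are
   integers, each infimum is attained, so this is exactly "d_H(A,B) <= beta". *)
Definition hausdorff_le {X : Type} (d : X -> X -> nat) (A B : X -> Prop) (beta : R) : Prop :=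
  (forall a, A a -> exists b, B b /\ INR (d a b) <= beta) /\
  (forall b, B b -> exists a, A a /\ INR (d a b) <= beta).

Definition stable_intervals {X : Type} (d : X -> X -> nat) (beta : R) : Prop :=
  forall x y y', d y y' = 1%nat ->
    hausdorff_le d (interval d x y) (interval d x y') beta.

Definition gromov {X : Type} (d : X -> X -> nat) (x y z : X) : R :=
  (INR (d z x) + INR (d z y) - INR (d x y)) / 2.

(* Main.v *)
Require Import Defs.
From Stdlib Require Import Reals Lra Lia.
Open Scope R_scope.

Lemma adj_one (X : Type) (d : X -> X -> nat) (g : nat -> X) (n i : nat) :
  (forall i j, (i <= n)%nat -> (j <= n)%nat ->
       INR (d (g i) (g j)) = Rabs (INR i - INR j)) ->
  (i < n)%nat -> d (g (S i)) (g i) = 1%nat.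
Proof.
  intros H Hi. specialize (H (S i) i ltac:(lia) ltac:(lia)).
  rewrite S_INR in H. replace (INR i + 1 - INR i) with 1 in H by ring.
  rewrite Rabs_pos_eq in H by lra. change 1 with (INR 1) in H.
  now apply INR_eq.
Qed.

Theorem lemma5p11 (X : Type) (d : X -> X -> nat) (beta : R)
  (Hgeo : discretely_geodesic d) (Hstab : stable_intervals d beta) :
  forall x y z : X, exists v : X,
    interval d x y v /\ INR (d z v) <= beta * (2 * gromov d x y z).
Proof.
  intros x y z.
  destruct Hgeo as [[Hd0 [Hsym Htri]] Hg].
  destruct (Rlt_or_le beta 0) as [Hb | Hb].
  -
    assert (Hall : forall a b, d a b = 0%nat).
    { intros a b. destruct (d a b) eqn:E; [reflexivity|].
      exfalso. destruct (Hg a b) as [g [g0 [gn gi]]].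
      assert (H1 : d (g 1%nat) (g 0%nat) = 1%nat)
        by (apply (adj_one X d g (d a b)); [exact gi | lia]).
      destruct (Hstab (g 0%nat) (g 1%nat) (g 0%nat) H1) as [HA _].
      destruct (HA (g 0%nat)) as [b' [_ Hb']].
      - unfold interval. rewrite (proj2 (Hd0 _ _) eq_refl). lia.
      - pose proof (pos_INR (d (g 0%nat) b')). lra. }
    exists x. split.
    + unfold interval. rewrite !Hall. reflexivity.
    + unfold gromov. rewrite !Hall. simpl. lra.
  - destruct (Hg y z) as [g [g0 [gn gi]]].
    set (n := d y z) in *.
    assert (Hk : forall k, (k <= n)%nat -> exists v c,
      interval d x (g (n - k)%nat) v /\ INR (d z v) <= beta * INR c /\
      (c + d x (g (n - k)%nat) <= k + d x z)%nat).
    { induction k as [|k IH]; intros Hkn.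
      - exists z, 0%nat. rewrite Nat.sub_0_r, gn. split; [|split].
        + unfold interval. rewrite (proj2 (Hd0 z z) eq_refl). lia.
        + rewrite (proj2 (Hd0 z z) eq_refl). simpl. lra.
        + lia.
      - destruct (IH ltac:(lia)) as [v [c [Hv [Hdv Hc]]]].
        assert (E : (n - k = S (n - S k))%nat) by lia.
        rewrite E in Hv, Hc.
        set (j := (n - S k)%nat) in *.
        assert (H1 : d (g (S j)) (g j) = 1%nat)
          by (apply (adj_one X d g n); [exact gi | unfold j; lia]).
        pose proof (Htri x (g (S j)) (g j)) as T1.
        pose proof (Htri x (g j) (g (S j))) as T2.
        rewrite (Hsym (g j) (g (S j))), H1 in T2.
        rewrite H1 in T1.
        destruct (Nat.eq_dec (d x (g j)) (S (d x (g (S j))))) as [Eq | Ne].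
        + exists v, c. split; [|split; [exact Hdv|lia]].
          unfold interval in *.
          pose proof (Htri x v (g j)) as Q1. pose proof (Htri v (g (S j)) (g j)) as Q2.
          rewrite H1 in Q2. lia.
        + destruct (Hstab x (g (S j)) (g j) H1) as [HA _].
          destruct (HA v Hv) as [b [Hbi Hbd]].
          exists b, (S c). split; [exact Hbi|split; [|lia]].
          pose proof (Htri z v b). apply le_INR in H.
          rewrite plus_INR in H. rewrite S_INR. lra. }
    destruct (Hk n (le_n _)) as [v [c [Hv [Hdv Hc]]]].
    rewrite Nat.sub_diag, g0 in Hv, Hc.
    exists v. split; [exact Hv|].
    eapply Rle_trans; [exact Hdv|]. apply Rmult_le_compat_l; [exact Hb|].
    unfold gromov. apply le_INR in Hc. rewrite !plus_INR in Hc.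
    rewrite (Hsym z x), (Hsym z y). fold n. lra.
Qed.
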